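(* Let $(R,\mathcal C)$ be a pair and $\mathfrak a$ a radical $\mathcal C$-ideal such that $(R,\mathcal C)$ is non-degenerate along $\mathfrak a$. Let $b$ be a test element of $(R,\mathcal C)$ along $\mathfrak a$. Then $\tau_{\mathfrak a}(R,\mathcal C)=Rb+\mathcal C_+b$. Furthermore, $(R,\mathcal C)$ is purely $F$-regular along $\mathfrak a$ if and only if $1$ is a principal test element of $(R,\mathcal C)$ along $\mathfrak a$, i.e. for every $r\in R$ not in any associated prime of $R/\mathfrak a$ there exist $e>0$ and $\phi\in\mathcal C_e$ with $\phi(F^e_*r)=1$.
   Context: All rings are noetherian $F$-finite commutative $\mathbb F_p$-algebras. $F^e_*R$ is $R$ viewed as an $R$-module via the $e$-th Frobenius, $\mathcal C_{e,R}=\operatorname{Hom}_R(F^e_*R,R)$, $\mathcal C_R=\bigoplus_{e\ge0}\mathcal C_{e,R}$ with product $\phi\cdot\phi'=\phi\circ F^e_*\phi'$. A pair $(R,\mathcal C)$ consists of $R$ and a graded $R$-subalgebra $\mathcal C\subseteq\mathcal C_R$; $\mathcal C_+=\bigoplus_{e>0}\mathcal C_e$. A $\mathcal C$-ideal is an ideal $\mathfrak b$ with $\phi(F^e_*\mathfrak b)\subseteq\mathfrak b$ for all $\phi\in\mathcal C_e$. $\mathcal C_+b$ denotes the ideal generated by all $\phi(F^e_*(rb))$, $e>0$, $\phi\in\mathcal C_e$, $r\in R$. A prime $\mathcal C$-ideal $\mathfrak p$ is a center of $F$-purity if $\mathcal C_+R\not\subseteq\mathfrak p$; $(R,\mathcal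 C)$ is non-degenerate along $\mathfrak a$ if all minimal primes of $\mathfrak a$ are centers of $F$-purity, and purely $F$-regular along $\mathfrak a$ if moreover every proper $\mathcal C$-ideal lies in some minimal prime of $\mathfrak a$. Let $U=\bigcup_{\mathfrak q\in\operatorname{Ass}(R/\mathfrak a)}\mathfrak q$. A principal test element along $\mathfrak a$ is $c\notin U$ such that for every $r\notin U$ there are $e>0$, $\phi\in\mathcal C_e$ with $\phi(F^e_*r)=c$ (such elements exist under the hypotheses). The test ideal $\tau_{\mathfrak a}(R,\mathcal C)$ is the smallest $\mathcal C$-ideal not contained in $U$ (equivalently $Rc+\mathcal C_+c$ for a principal test element $c$); a test element is an element of $\tau_{\mathfrak a}(R,\mathcal C)\setminus U$. *)

(* Defs.v *)
From mathcomp Require Import all_boot all_algebra.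
Set Implicit Arguments. Unset Strict Implicit. Unset Printing Implicit Defensive.
Import GRing.Theory.
Local Open Scope ring_scope.

Section Defs.
Variable R : comNzRingType.

Definition subsetR (I J : R -> Prop) := forall x, I x -> J x.

Definition is_ideal (I : R -> Prop) : Prop :=
  [/\ I 0, (forall x y, I x -> I y -> I (x + y)) & (forall r x, I x -> I (r * x))].

Definition is_prime (P : R -> Prop) : Prop :=
  [/\ is_ideal P, ~ P 1 & (forall x y, P (x * y) -> P x \/ P y)].

Definition is_radical (I : R -> Prop) : Prop :=
  is_ideal I /\ forall x n, I (x ^+ n) -> I x.

Definition ideal_gen (S : R -> Prop) (x : R) : Prop :=
  forall I, is_ideal I -> subsetR S I -> I x.

Definition ideal_add (I J : R -> Prop) (x : R) : Prop :=
  exists i j, [/\ I i, J j & x = i + j].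

Definition principal (b : R) (x : R) : Prop := exists r, x = r * b.

Definition noetherian : Prop :=
  forall I : nat -> R -> Prop, (forall n, is_ideal (I n)) ->
    (forall n, subsetR (I n) (I n.+1)) ->
    exists N, forall n, (N <= n)%N -> subsetR (I n) (I N).

(* F-finite: F_* R is a finitely generated R-module, where r acts on
   F_* R by x |-> r^p x *)
Definition F_finite (p : nat) : Prop :=
  exists s : seq R, forall x, exists c : seq R,
    x = \sum_(i < size s) (c`_i ^+ p) * s`_i.

(* phi : F^e_* R -> R is R-linear, i.e. an element of C_{e,R} *)
Definition cartier_map (p e : nat) (phi : R -> R) : Prop :=
  (forall x y, phi (x + y) = phi x + phi y) /\
  (forall r x, phi (r ^+ (p ^ e) * x) = r * phi x).

(* a pair (R, C): C e phi means phi \in C_e; C is a graded R-subalgebra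
   of C_R = \bigoplus_e Hom_R(F^e_* R, R) with product phi . psi = phi o psi *)
Definition is_pair (p : nat) (C : nat -> (R -> R) -> Prop) : Prop :=
  [/\ (forall e phi, C e phi -> cartier_map p e phi),
      (forall r, C 0%N (fun x => r * x)),
      (forall e, C e (fun _ => 0)),
      (forall e phi psi, C e phi -> C e psi -> C e (fun x => phi x + psi x)) &
      (forall e e' phi psi, C e phi -> C e' psi -> C (e + e')%N (fun x => phi (psi x)))].

Variable C : nat -> (R -> R) -> Prop.

Definition C_ideal (b : R -> Prop) : Prop :=
  is_ideal b /\ forall e phi x, C e phi -> b x -> b (phi x).

Definition Cplus (b : R) : R -> Prop :=
  ideal_gen (fun x => exists e phi r, [/\ (0 < e)%N, C e phi & x = phi (r * b)]).

Definition minimal_prime (a q : R -> Prop) : Prop :=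
  [/\ is_prime q, subsetR a q &
      forall q', is_prime q' -> subsetR a q' -> subsetR q' q -> subsetR q q'].

(* associated primes of R/a : primes of the form (a : x) *)
Definition assoc_prime (a q : R -> Prop) : Prop :=
  is_prime q /\ exists x, forall r, q r <-> a (r * x).

Definition inU (a : R -> Prop) (r : R) : Prop :=
  exists q, assoc_prime a q /\ q r.

Definition F_purity_center (P : R -> Prop) : Prop :=
  [/\ is_prime P, C_ideal P & ~ subsetR (Cplus 1) P].

Definition non_degenerate (a : R -> Prop) : Prop :=
  forall q, minimal_prime a q -> F_purity_center q.

Definition purely_F_regular (a : R -> Prop) : Prop :=
  non_degenerate a /\
  forall J, C_ideal J -> ~ J 1 -> exists q, minimal_prime a q /\ subsetR J q.

Definition principal_test_element (a : R -> Prop) (c : R) : Prop :=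
  ~ inU a c /\
  forall r, ~ inU a r -> exists e phi, [/\ (0 < e)%N, C e phi & phi r = c].

(* test ideal: the smallest C-ideal not contained in U, realised as the
   intersection of all C-ideals not contained in U *)
Definition test_ideal (a : R -> Prop) (x : R) : Prop :=
  forall J, C_ideal J -> ~ subsetR J (inU a) -> J x.

Definition test_element (a : R -> Prop) (b : R) : Prop :=
  test_ideal a b /\ ~ inU a b.

End Defs.

(* Main.v *)
Require Import Defs.
From mathcomp Require Import all_boot all_algebra.
From mathcomp Require Import ring.
From Stdlib Require Import Classical ClassicalEpsilon.
Import GRing.Theory.
Local Open Scope ring_scope.

Section A.
Set Implicit Arguments.
Variable R : comNzRingType.
Implicit Types (I J a b q : R -> Prop).

Lemma ideal0 I : is_ideal I -> I 0. Proof. by case. Qed.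
Lemma idealD I x y : is_ideal I -> I x -> I y -> I (x + y).
Proof. by case=> _ h _; apply: h. Qed.
Lemma idealMl I r x : is_ideal I -> I x -> I (r * x).
Proof. by case=> _ _ h; apply: h. Qed.
Lemma idealMr I r x : is_ideal I -> I x -> I (x * r).
Proof. by move=> hI hx; rewrite mulrC; apply: idealMl. Qed.
Lemma idealN I x : is_ideal I -> I x -> I (- x).
Proof. by move=> hI hx; rewrite -mulN1r; apply: idealMl. Qed.
Lemma idealB I x y : is_ideal I -> I x -> I y -> I (x - y).
Proof. by move=> hI hx hy; apply: idealD => //; apply: idealN. Qed.
Lemma ideal_sum I n (F : 'I_n -> R) : is_ideal I -> (forall i, I (F i)) ->
  I (\sum_(i < n) F i).
Proof.
move=> hI hF; apply: (big_ind I) => //; first exact: ideal0.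
by move=> u v; apply: idealD.
Qed.

Lemma rad_add I x y n m : is_ideal I -> I (x ^+ n) -> I (y ^+ m) ->
  I ((x + y) ^+ (n + m)).
Proof.
move=> hI hx hy; rewrite exprDn; apply: ideal_sum => // i.
rewrite -mulr_natl; apply: idealMl => //.
case: (leqP m i) => Hi.
  rewrite -(subnKC Hi) exprD; apply: idealMl => //; exact: idealMr.
rewrite -addnBA; last exact: ltnW.
rewrite exprD; apply: idealMr => //; exact: idealMr.
Qed.

Definition radI I := fun z : R => exists n, I (z ^+ n).

Lemma rad_is_radical I : is_ideal I -> is_radical (radI I).
Proof.
move=> hI; split; first split.
- by exists 1%N; rewrite expr1; apply: ideal0.
- by move=> x y [n hn] [m hm]; exists (n + m)%N; apply: rad_add.
- by move=> r x [n hn]; exists n; rewrite exprMn; apply: idealMl.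
- by move=> x n [m hm]; exists (n * m)%N; rewrite exprM.
Qed.

Fixpoint allL (f : (R -> Prop) -> Prop) (L : seq (R -> Prop)) : Prop :=
  if L is q :: L' then f q /\ allL f L' else True.
Fixpoint exL (f : (R -> Prop) -> Prop) (L : seq (R -> Prop)) : Prop :=
  if L is q :: L' then f q \/ exL f L' else False.

Lemma allL_cat f L1 L2 : allL f (L1 ++ L2) <-> allL f L1 /\ allL f L2.
Proof.
elim: L1 => [|q L1 IH] /=; first by split=> // [[]].
by rewrite IH; split=> [[h [h1 h2]]|[[h h1] h2]].
Qed.
Lemma allL_impl (f g : (R -> Prop) -> Prop) L : (forall q, f q -> g q) ->
  allL f L -> allL g L.
Proof. by move=> h; elim: L => //= q L IH [h1 h2]; split; [apply: h|apply: IH]. Qed.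
Lemma allL_and f g L : allL f L -> allL g L -> allL (fun q => f q /\ g q) L.
Proof. by elim: L => //= q L IH [h1 h2] [h3 h4]; split; [|apply: IH]. Qed.
Lemma exL_all f g L : allL f L -> exL g L -> exists q, f q /\ g q.
Proof.
elim: L => //= q L IH [h1 h2] [h3|h3]; first by exists q.
exact: IH.
Qed.
Lemma exL_allL f g L : allL f L -> exL g L -> exL (fun q => f q /\ g q) L.
Proof. by elim: L => //= q L IH [h1 h2] [h3|h3]; [left|right; apply: IH]. Qed.
Lemma exL_impl (f g : (R -> Prop) -> Prop) L : (forall q, f q -> g q) ->
  exL f L -> exL g L.
Proof. by move=> h; elim: L => //= q L IH [h1|h1]; [left; apply: h|right; apply: IH]. Qed.
Lemma not_exL f L : ~ exL f L -> allL (fun q => ~ f q) L.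
Proof.
elim: L => //= q L IH hn; split; first by move=> h; apply: hn; left.
by apply: IH => h; apply: hn; right.
Qed.
Lemma exL_ex f L : exL f L -> exists q, f q.
Proof. by elim: L => //= q L IH [h|h]; [exists q|apply: IH]. Qed.

Arguments allL_cat {f L1 L2}.
Arguments allL_impl {f g L}.
Arguments allL_and {f g L}.
Arguments exL_all {f g L}.
Arguments exL_allL {f g L}.
Arguments exL_impl {f g L}.
Arguments not_exL {f L}.
Arguments exL_ex {f L}.

Lemma prod_avoid q (P : (R -> Prop) -> Prop) L : is_prime q ->
  allL (fun q' => P q' -> is_ideal q' /\ ~ subsetR q' q) L ->
  exists w, ~ q w /\ allL (fun q' => P q' -> q' w) L.
Proof.
move=> hq; elim: L => [|q' L IH] /=.
  by exists 1; split=> //; case: hq.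
case=> h1 h2; have [w [hw hL]] := IH h2.
case: (classic (P q')) => HP; last by exists w; split=> //; split.
have [hI hns] := h1 HP.
have [z [hz hzq]] : exists z, q' z /\ ~ q z.
  apply: NNPP => hn; apply: hns => z hz; apply: NNPP => hnq; apply: hn.
  by exists z.
exists (z * w); split.
  by case: hq => _ _ hpr; case/hpr.
split=> [_|]; first exact: idealMr.
move: (allL_and h2 hL); apply: allL_impl => q'' [h3 h4] hP''.
have [hI'' _] := h3 hP''; exact: idealMl (h4 hP'').
Qed.

Lemma avoid_aux (P : (R -> Prop) -> Prop) J L : is_ideal J ->
  (forall q, P q -> is_prime q) ->
  (forall q q', P q -> P q' -> subsetR q' q -> subsetR q q') ->
  allL (fun q => P q -> ~ subsetR J q) L ->
  exists x, J x /\ allL (fun q => P q -> ~ q x) L.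
Proof.
move=> hJ hPp hPm; elim: L => [|q L IH] /=.
  by move=> _; exists 0; split=> //; apply: ideal0.
case=> h1 h2; have [x [hx hL]] := IH h2.
case: (classic (P q)) => HP; last by exists x; split=> //; split.
case: (classic (q x)) => hqx; last by exists x; split.
have hqp := hPp q HP.
have [w [hw hwL]] : exists w, ~ q w /\ allL (fun q' => P q' -> q' w) L.
  apply: prod_avoid => //; apply: allL_impl hL => q' h hP'; split.
    by case: (hPp q' hP').
  move=> hs; apply: (h hP'); exact: (hPm q q' HP hP' hs).
have [y [hy hyq]] : exists y, J y /\ ~ q y.
  apply: NNPP => hn; apply: (h1 HP) => z hz; apply: NNPP => hnq; apply: hn.
  by exists z.
have [hqI _ hqpr] := hqp.
exists (x + y * w); split; first by apply: idealD => //; apply: idealMr.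
split.
  move=> _ hq'; have : q ((x + y * w) - x) by apply: idealB.
  by rewrite addrC addKr => /hqpr [].
apply: allL_impl (allL_and hL hwL) => q' [h3 h4] hP' hq'.
have [hI' _ _] := hPp q' hP'.
apply: (h3 hP'); have -> : x = (x + y * w) - y * w by rewrite addrK.
apply: idealB => //; apply: idealMl => //; exact: h4.
Qed.

Lemma avoid (P : (R -> Prop) -> Prop) J L : is_ideal J ->
  (forall q, P q -> is_prime q) ->
  (forall q q', P q -> P q' -> subsetR q' q -> subsetR q q') ->
  (forall x, J x -> exL (fun q => P q /\ q x) L) ->
  exL (fun q => P q /\ subsetR J q) L.
Proof.
move=> hJ hPp hPm hU; apply: NNPP => hn.
have := not_exL hn => hall.
have [x [hx hxL]] := @avoid_aux P J L hJ hPp hPm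
  (allL_impl (fun q h hP hs => h (conj hP hs)) hall).
have [q [h1 [h2 h3]]] := exL_all hxL (hU x hx).
exact: h1.
Qed.

Lemma acc_max (F : (R -> Prop) -> Prop) I0 : noetherian R ->
  (forall I, F I -> is_ideal I) -> F I0 ->
  exists I, F I /\ forall J, F J -> subsetR I J -> subsetR J I.
Proof.
move=> hN hFI hI0; apply: NNPP => hno.
have step : forall I, F I -> exists J, F J /\ subsetR I J /\ ~ subsetR J I.
  move=> I hI; apply: NNPP => hn; apply: hno; exists I; split=> // J hJ hIJ.
  apply: NNPP => hJI; apply: hn; by exists J.
have nxt : forall s : {I | F I},
    {J | F J /\ subsetR (sval s) J /\ ~ subsetR J (sval s)}.
  by move=> s; apply: constructive_indefinite_description; exact: step (svalP s).
pose f (s : {I | F I}) : {I | F I} := exist F (sval (nxt s)) (proj1 (svalP (nxt s))).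
pose s0 := exist F I0 hI0.
pose ch n := sval (iter n f s0).
have [N hN'] := hN ch (fun n => hFI _ (svalP (iter n f s0)))
   (fun n => proj1 (proj2 (svalP (nxt (iter n f s0))))).
apply: (proj2 (proj2 (svalP (nxt (iter N f s0))))).
exact: (hN' N.+1 (leqnSn N)).
Qed.

Definition Dec b L := allL (fun q => is_prime q /\ subsetR b q) L /\
  (forall x, allL (fun q => q x) L -> b x).

Definition addx b c := fun w : R => exists s t, b s /\ w = s + t * c.

Lemma ideal_addx b c : is_ideal b -> is_ideal (addx b c).
Proof.
move=> hb; split.
- by exists 0, 0; split; [apply: ideal0|rewrite mul0r addr0].
- move=> x y [s [t [hs ->]]] [s' [t' [hs' ->]]]; exists (s + s'), (t + t').
  by split; [apply: idealD|ring].
- move=> r x [s [t [hs ->]]]; exists (r * s), (r * t).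
  by split; [apply: idealMl|ring].
Qed.

Lemma decomp a : noetherian R -> is_radical a -> exists L, Dec a L.
Proof.
move=> hN ha; apply: NNPP => hno.
have [b [[hb hbnd] hmax]] :=
  @acc_max (fun b => is_radical b /\ ~ exists L, Dec b L) a hN
    (fun I h => proj1 (proj1 h)) (conj ha hno).
have hbI := proj1 hb.
case: (classic (b 1)) => hb1.
  apply: hbnd; exists [::]; split=> // x _; rewrite -(mulr1 x); exact: idealMl.
case: (classic (is_prime b)) => hbp.
  apply: hbnd; exists [:: b]; split=> /=; first by do 2 split.
  by move=> z [].
have [x [y [hxy [hx hy]]]] : exists x y, b (x * y) /\ ~ b x /\ ~ b y.
  apply: NNPP => hn; apply: hbp; split=> // u v huv.
  apply: NNPP => hn2; apply: hn; exists u, v; split=> //.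
  by split=> h; apply: hn2; [left|right].
have gen : forall c, ~ b c -> subsetR b (radI (addx b c)) /\
    exists L, Dec (radI (addx b c)) L.
  move=> c hc.
  have rad_c := rad_is_radical (ideal_addx c hbI).
  have sub_c : subsetR b (radI (addx b c)).
    by move=> z hz; exists 1%N, z, 0; rewrite expr1 mul0r addr0.
  split=> //; apply: NNPP => hn.
  apply: hc; apply: (hmax _ (conj rad_c hn) sub_c).
  by exists 1%N, 0, 1; rewrite expr1 add0r mul1r; split=> //; apply: ideal0.
have [sx [L1 hL1]] := gen x hx.
have [sy [L2 hL2]] := gen y hy.
apply: hbnd; exists (L1 ++ L2); split.
  apply/allL_cat; split.
    by apply: allL_impl (proj1 hL1) => q [hq hs]; split=> // z /sx /hs.
  by apply: allL_impl (proj1 hL2) => q [hq hs]; split=> // z /sy /hs.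
move=> z /allL_cat [h1 h2].
have [n [s [t [hs e1]]]] := proj2 hL1 z h1.
have [m [s' [t' [hs' e2]]]] := proj2 hL2 z h2.
apply: (proj2 hb z (n + m)%N); rewrite exprD e1 e2.
have -> : (s + t * x) * (s' + t' * y) =
   s * (s' + t' * y) + ((t * x) * s' + (t * t') * (x * y)) by ring.
apply: idealD => //; first exact: idealMr.
apply: idealD => //; [exact: idealMl|exact: idealMl].
Qed.

Lemma assoc_min a q : is_radical a -> assoc_prime a q -> minimal_prime a q.
Proof.
move=> [haI har] [hq [x hx]].
have [hqI hq1 hqpr] := hq.
split=> //.
  by move=> r hr; apply/hx; apply: idealMr.
move=> q' hq' haq' hq'q r /hx /haq'.
have [_ _ hpr'] := hq'.
case/hpr' => // /hq'q /hx; rewrite -expr2 => /har h.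
by exfalso; apply: hq1; apply/hx; rewrite mul1r.
Qed.

Lemma min_assoc_aux a q L : minimal_prime a q ->
  allL (fun q' => is_prime q' /\ subsetR a q') L ->
  exists x, ~ q x /\ forall r, q r -> allL (fun q' => q' (r * x)) L.
Proof.
move=> hmin; have [hq haq hm] := hmin; have [hqI hq1 hqpr] := hq.
elim: L => [|q' L IH] /=.
  by move=> _; exists 1.
case=> [[hq'p hq'a] hL]; have [x' [hnx' hx']] := IH hL.
have [hq'I _ _] := hq'p.
case: (classic (subsetR q' q)) => hs.
  exists x'; split=> // r hr; split; last exact: hx'.
  by apply: idealMr => //; apply: (hm q').
have [z [hz hnz]] : exists z, q' z /\ ~ q z.
  apply: NNPP => hn; apply: hs => z hz; apply: NNPP => hnq; apply: hn.
  by exists z.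
exists (z * x'); split; first by case/hqpr.
move=> r hr; split; first by rewrite mulrCA; apply: idealMr.
apply: allL_impl (allL_and hL (hx' r hr)) => q'' [[[hI _ _] _] h].
by rewrite mulrCA; apply: idealMl.
Qed.

Lemma min_assoc a q L : Dec a L -> minimal_prime a q -> assoc_prime a q.
Proof.
move=> [hL hLa] hmin; have [hq haq _] := hmin; have [_ _ hqpr] := hq.
have [x [hnx hx]] := @min_assoc_aux a q L hmin hL.
split=> //; exists x => r; split.
  by move=> /hx h; apply: hLa.
by move=> /haq /hqpr [].
Qed.

Lemma prime_over a q L : Dec a L -> is_prime q -> subsetR a q ->
  exL (fun q' => subsetR q' q) L.
Proof.
move=> [hL hLa] hq haq; apply: NNPP => hn.
have := not_exL hn => hall.
have [w [hw hwL]] : exists w, ~ q w /\ allL (fun q' => True -> q' w) L.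
  apply: prod_avoid => //; move: (allL_and hL hall); apply: allL_impl.
  by move=> q' [[[hI _ _] _] h] _.
apply: hw; apply: haq; apply: hLa.
by apply: allL_impl hwL => q' h; apply: h.
Qed.

Lemma U_in_L a L J : is_radical a -> Dec a L -> (forall x, J x -> inU a x) ->
  forall x, J x -> exL (fun q => minimal_prime a q /\ q x) L.
Proof.
move=> ha hD hJ x hx; have [q' [hass hq'x]] := hJ x hx.
have hmin := assoc_min ha hass; have [hq' haq' hm'] := hmin.
have := exL_allL (proj1 hD) (prime_over hD hq' haq').
apply: exL_impl => qi [[hqi haqi] hs].
have hs' := hm' qi hqi haqi hs.
split; last exact: hs'.
split=> // q'' h1 h2 h3 z hz.
by apply: (hm' q'' h1 h2 (fun u hu => hs _ (h3 _ hu))); exact: hs.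
Qed.

End A.

Section B.
Set Implicit Arguments.
Variable R : comNzRingType.
Variables (p : nat) (C : nat -> (R -> R) -> Prop).
Hypotheses (hp : prime p) (hC : is_pair p C).

Lemma cart e phi : C e phi -> cartier_map p e phi.
Proof. by have [h _ _ _ _] := hC; apply: h. Qed.
Lemma C_mul r : C 0 (fun x => r * x). Proof. by have [_ h _ _ _] := hC. Qed.
Lemma C_zero e : C e (fun _ => 0). Proof. by have [_ _ h _ _] := hC. Qed.
Lemma C_add e phi psi : C e phi -> C e psi -> C e (fun x => phi x + psi x).
Proof. move=> h1 h2; have [_ _ _ h _] := hC; exact: h. Qed.
Lemma C_comp e e' phi psi : C e phi -> C e' psi -> C (e + e') (fun x => phi (psi x)).
Proof. move=> h1 h2; have [_ _ _ _ h] := hC; exact: h. Qed.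
Lemma phiD e phi x y : C e phi -> phi (x + y) = phi x + phi y.
Proof. by move/cart => [h _]. Qed.
Lemma phiM e phi r x : C e phi -> phi (r ^+ (p ^ e) * x) = r * phi x.
Proof. by move/cart => [_ h]. Qed.
Lemma phi0 e phi : C e phi -> phi 0 = 0.
Proof.
move=> h; have := phiD 0 0 h; rewrite addr0 => e1.
by apply: (@addrI _ (phi 0)); rewrite addr0 -e1.
Qed.
Lemma phiM0 phi r x : C 0 phi -> phi (r * x) = r * phi x.
Proof. by move=> h; have := phiM r x h; rewrite expn0 expr1. Qed.

Definition Kd x e y := exists phi, C e phi /\ y = phi x.

Lemma Kd_ideal x e : is_ideal (Kd x e).
Proof.
split.
- by exists (fun _ => 0); split=> //; apply: C_zero.
- move=> u v [phi [hphi ->]] [psi [hpsi ->]].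
  by exists (fun y => phi y + psi y); split=> //; apply: C_add.
- move=> r u [phi [hphi ->]]; exists (fun y => r * phi y); split=> //.
  by have := C_comp (C_mul r) hphi; rewrite add0n.
Qed.

Lemma Kd_mul x a b y z : Kd x a y -> Kd x b z -> Kd x (a + b) (y * z).
Proof.
move=> [phi [hphi ->]] [psi [hpsi ->]].
exists (fun u => phi ((x * psi x ^+ (p ^ a).-1) * psi u)); split.
  by have := C_comp hphi (C_comp (C_mul (x * psi x ^+ (p ^ a).-1)) hpsi); rewrite add0n.
have -> : x * psi x ^+ (p ^ a).-1 * psi x = psi x ^+ (p ^ a) * x.
  have hpa : (0 < p ^ a)%N by rewrite expn_gt0 prime_gt0.
  by rewrite -mulrA -exprSr (prednK hpa) mulrC.
by rewrite phiM // mulrC.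
Qed.

Lemma Kd_exp x e y k : Kd x e y -> Kd x (k.+1 * e) (y ^+ k.+1).
Proof.
move=> h; elim: k => [|k IH]; first by rewrite mul1n expr1.
by rewrite exprS mulSn; apply: Kd_mul.
Qed.

Definition T x := fun y => exists n e, (0 < e)%N /\ Kd x e (y ^+ n).

Lemma T_ideal x : is_ideal (T x).
Proof.
split.
- exists 1%N, 1%N; split=> //; rewrite expr1; exact: ideal0 (Kd_ideal x 1).
- move=> y z [n [a [ha hy]]] [m [b [hb hz]]].
  case: a ha hy => // a _ hy; case: b hb hz => // b _ hz.
  exists (n * b.+1 + m * a.+1)%N, (a.+1 * b.+1)%N; split=> //.
  apply: rad_add; first exact: Kd_ideal.
    by rewrite exprM mulnC; apply: Kd_exp.
  by rewrite exprM; apply: Kd_exp.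
- move=> r y [n [e [he hy]]]; exists n, e; split=> //.
  by rewrite exprMn; apply: idealMl => //; apply: Kd_ideal.
Qed.

Lemma ideal_gen_ideal (S : R -> Prop) : is_ideal (ideal_gen S).
Proof.
split.
- by move=> I hI _; apply: ideal0.
- by move=> x y hx hy I hI hS; apply: idealD => //; [apply: hx|apply: hy].
- by move=> r x hx I hI hS; apply: idealMl => //; apply: hx.
Qed.

Lemma Cplus_T x y : Cplus C x y -> T x y.
Proof.
apply; first exact: T_ideal.
move=> z [e [phi [r [he hphi ->]]]]; exists 1%N, e; split=> //.
exists (fun u => phi (r * u)); split; last by rewrite expr1.
by have := C_comp hphi (C_mul r); rewrite addn0.
Qed.

Lemma single x : Cplus C x 1 -> exists e phi, [/\ (0 < e)%N, C e phi & phi x = 1].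
Proof.
move/Cplus_T => [n [e [he [phi [hphi e1]]]]].
by exists e, phi; split=> //; rewrite -e1 expr1n.
Qed.

Lemma Cplus_closed b e phi s c : C e phi -> Cplus C b c -> Cplus C b (phi (s * c)).
Proof.
move=> hphi hc.
have hCI : is_ideal (Cplus C b) := ideal_gen_ideal _.
suff : forall e phi s, C e phi -> Cplus C b (phi (s * c)) by move/(_ e phi s hphi).
apply: (hc (fun c => forall e phi s, C e phi -> Cplus C b (phi (s * c)))).
  split.
  - by move=> e' phi' s' h; rewrite mulr0 (phi0 h); exact: (@ideal0 _ _ hCI).
  - move=> u v hu hv e' phi' s' h; rewrite mulrDr (phiD _ _ h).
    exact: (@idealD _ _ _ _ hCI (hu _ _ _ h) (hv _ _ _ h)).
  - by move=> r u hu e' phi' s' h; rewrite mulrA; exact: (hu _ _ _ h).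
move=> z [e' [psi [t [he' hpsi ->]]]] e'' phi' s' h.
move=> I hI hS; apply: hS.
exists (e'' + e')%N, (fun u => phi' (s' * psi u)), t; split.
- by rewrite addn_gt0 he' orbT.
- by have := C_comp h (C_comp (C_mul s') hpsi); rewrite add0n.
- by [].
Qed.

Lemma Cplus_Cideal b : C_ideal C (Cplus C b).
Proof.
split; first exact: ideal_gen_ideal.
by move=> e phi x hphi hx; have := Cplus_closed 1 hphi hx; rewrite mul1r.
Qed.

Definition RC b := ideal_add (principal b) (Cplus C b).

Lemma RC_Cideal b : C_ideal C (RC b).
Proof.
have hCI : is_ideal (Cplus C b) := ideal_gen_ideal _.
split; first split.
- exists 0, 0; split; [by exists 0; rewrite mul0r| exact: (@ideal0 _ _ hCI)|by rewrite addr0].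
- move=> x y [i [j [[r ->] hj ->]]] [i' [j' [[r' ->] hj' ->]]].
  exists ((r + r') * b), (j + j'); split.
  + by exists (r + r').
  + exact: (@idealD _ _ _ _ hCI hj hj').
  + by rewrite mulrDl !addrA (addrAC (r * b)).
- move=> t x [i [j [[r ->] hj ->]]]; exists ((t * r) * b), (t * j); split.
  + by exists (t * r).
  + exact: (@idealMl _ _ t _ hCI hj).
  + by rewrite mulrDr mulrA.
move=> e phi x hphi [i [j [[r ->] hj ->]]].
rewrite (phiD _ _ hphi).
case: e hphi => [|e] hphi.
  exists ((r * phi 1) * b), (phi j); split.
  + by exists (r * phi 1).
  + by have := Cplus_closed 1 hphi hj; rewrite mul1r.
  + rewrite (phiM0 _ _ hphi) -[b in phi b]mulr1 (phiM0 _ _ hphi).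
    by rewrite [b * _]mulrC mulrA.
exists 0, (phi (r * b) + phi j); split.
+ by exists 0; rewrite mul0r.
+ apply: (@idealD _ _ _ _ hCI).
    by move=> I hI' hS; apply: hS; exists e.+1, phi, r.
  by have := Cplus_closed 1 hphi hj; rewrite mul1r.
+ by rewrite add0r.
Qed.

End B.

Theorem theorem2p12 (R : comNzRingType) (p : nat)
  (C : nat -> (R -> R) -> Prop) (a : R -> Prop) :
  prime p -> p \in [pchar R] -> noetherian R -> F_finite R p ->
  is_pair p C -> is_radical a -> C_ideal C a -> non_degenerate C a ->
  (forall b, test_element C a b ->
     forall x, test_ideal C a x <-> ideal_add (principal b) (Cplus C b) x) /\
  (purely_F_regular C a <-> principal_test_element C a 1).
Proof.
move=> hp hch hN hFf hC ha haC hnd.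
have [L hL] := decomp hN ha.
split.
  move=> b [hbt hbU] x; split.
    move=> hx; apply: hx; first exact: (RC_Cideal hC b).
    move=> hs; apply: hbU; apply: hs; exists b, 0; split.
    - by exists 1; rewrite mul1r.
    - have hCI : is_ideal (Cplus C b) := ideal_gen_ideal _ _.
      exact: (@ideal0 _ _ hCI).
    - by rewrite addr0.
  move=> [i [j [[r ->] hj ->]]] J hJ hJU.
  have Jb := hbt J hJ hJU; have [hJI hJC] := hJ.
  apply: idealD => //; first exact: idealMl.
  apply: hj => // z [e [phi [s [he hphi ->]]]].
  by apply: hJC hphi _; apply: idealMl.
split.
  move=> [_ hpfr]; split.
    by case=> q [[[_ hq1 _] _] hq1'].
  move=> r hr.
  have h1 : Cplus C 1 1.
    apply: NNPP => hn.
    have [q [hmin hsub]] := hpfr _ (Cplus_Cideal hC 1) hn.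
    have [_ _ hns] := hnd q hmin; exact: hns hsub.
  have [e0 [psi [he0 hpsi hpsi1]]] := single hp hC h1.
  apply: (single hp hC); apply: NNPP => hn.
  have [q [hmin hsub]] := hpfr _ (Cplus_Cideal hC r) hn.
  apply: hr; exists q; split; first exact: min_assoc hL hmin.
  apply: hsub => I hI hS; apply: hS; exists e0, psi, (r ^+ (p ^ e0).-1); split => //.
  have hpa : (0 < p ^ e0)%N by rewrite expn_gt0 prime_gt0.
  by rewrite -exprSr (prednK hpa) -[r ^+ _]mulr1 (phiM hC e0 psi r 1 hpsi) hpsi1 mulr1.
move=> [h1 h2]; split => // J hJ hJ1.
have hJU : forall x, J x -> inU a x.
  move=> x hx; apply: NNPP => hn.
  have [e [phi [he hphi e1]]] := h2 x hn.
  by apply: hJ1; rewrite -e1; apply: (proj2 hJ) e phi x hphi hx.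
have := @avoid R (minimal_prime a) J L (proj1 hJ) _ _ (U_in_L J ha hL hJU).
move=> /(_ _ _) /exL_ex; apply.
- by move=> q [].
- by move=> q q' [_ _ hm] [hq' haq' _]; apply: hm.
Qed.
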